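(* Let $K_0$ be a number field, $K$ a finite Galois extension of $K_0$, $R$ the ring of integers of $K$, and $0\ne b\in R$. Then there exists $z\in R\setminus R^\times$ which is a primitive element of $K/K_0$ such that its conjugates $z^\gamma$, $\gamma\in\operatorname{Gal}(K/K_0)$, are pairwise coprime (i.e. $z^\gamma R+z^{\delta}R=R$ for $\gamma\ne\delta$), and each conjugate of $z$ is coprime to $b$. *)

(* Defs.v *)
From HB Require Import structures.
From mathcomp Require Import all_boot all_order all_algebra all_fingroup all_solvable all_field.
Set Implicit Arguments. Unset Strict Implicit. Unset Printing Implicit Defensive.
Import GRing.Theory Num.Theory.
Local Open Scope ring_scope.

Definition is_alg_integer (L : nzRingType) (x : L) : Prop :=
  exists p : {poly int}, p \is monic /\ root (map_poly (intr : int -> L) p) x.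

Definition in_ring_of_integers (F : fieldType) (L : fieldExtType F)
    (K : {vspace L}) (x : L) : Prop :=
  x \in K /\ is_alg_integer x.

(* Main.v *)
Require Import Defs.
From HB Require Import structures.
From mathcomp Require Import all_boot all_order all_algebra all_fingroup all_solvable all_field.
From mathcomp Require Import ring zify.
Import GRing.Theory Num.Theory.
Local Open Scope ring_scope.

Section Helpers.
Context {L : splittingFieldType rat}.

Notation Int x := (integralOver (intr : int -> L) x).

Lemma IntE (x : L) : is_alg_integer x <-> Int x.
Proof. by split=> [[p [mp rp]]|[p mp rp]]; exists p. Qed.

Lemma Int_aend (f : 'AEnd(L)) (x : L) : Int x -> Int (f x).
Proof.
case=> p mp rp; exists p => //.
have := rmorph_root f rp; rewrite -map_poly_comp.
by rewrite (eq_map_poly (fun a => rmorph_int f a)).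
Qed.

Lemma Int_int (a : int) : Int (a%:~R : L).
Proof. exact: integral_id. Qed.

Lemma Int_M (x y : L) : Int x -> Int y -> Int (x * y).
Proof. exact: integral_mul. Qed.
Lemma Int_D (x y : L) : Int x -> Int y -> Int (x + y).
Proof. exact: integral_add. Qed.
Lemma Int_N (x : L) : Int x -> Int (- x).
Proof. exact: integral_opp. Qed.
Lemma Int_B (x y : L) : Int x -> Int y -> Int (x - y).
Proof. exact: integral_sub. Qed.
Lemma Int_1 : Int (1 : L). Proof. exact: integral1. Qed.

Lemma Int_X (x : L) n : Int x -> Int (x ^+ n).
Proof. by move=> Ix; elim: n => [|n IH]; [exact: Int_1 | rewrite exprS; exact: Int_M]. Qed.

Lemma Int_prod (I : finType) (P : pred I) (F : I -> L) :
  (forall i, P i -> Int (F i)) -> Int (\prod_(i | P i) F i).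
Proof. by move=> H; apply: big_ind => //; [exact: Int_1 | exact: Int_M]. Qed.

Lemma Int_rat (r : rat) : Int (r%:A : L) -> r \is a Num.int.
Proof.
case=> p mp rp.
have rp' : root (map_poly (intr : int -> rat) p) r.
  rewrite -(fmorph_root (in_alg L)) -map_poly_comp.
  by rewrite (eq_map_poly (fun a => rmorph_int (in_alg L) a)).
have rpC : root (map_poly (intr : int -> algC) p) (ratr r).
  rewrite -(fmorph_root (ratr : rat -> algC)) in rp'.
  by rewrite -map_poly_comp (eq_map_poly (fun a => rmorph_int _ a)) in rp'.
rewrite -Cint_rat; apply: Cint_rat_Aint; first exact: Crat_rat.
apply: root_monic_Aint rpC _ _; first exact: monic_map.
by apply/polyOverP => i; rewrite coef_map /= rpred_int.
Qed.


Lemma Int_scale_root (p : {poly L}) (x c : L) :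
  p \is monic -> root p x -> Int c ->
  (forall i, (i < (size p).-1)%N -> Int (p`_i * c)) -> Int (c * x).
Proof.
move=> mp rp Ic Ip.
set k := (size p).-1.
have sp : size p = k.+1.
  by rewrite /k prednK // lt0n size_poly_eq0 monic_neq0.
pose P := \poly_(i < size p) (p`_i * c ^+ (k - i)).
have coefP i : P`_i = if (i < size p)%N then p`_i * c ^+ (k - i) else 0.
  by rewrite coef_poly.
apply: (@integral_root_monic int L intr (c * x) P).
- rewrite monicE /lead_coef.
  have -> : size P = size p.
    apply: size_poly_eq; rewrite sp /= subnn expr0 mulr1.
    have := monicP mp; rewrite /lead_coef sp /= => ->; exact: oner_neq0.
  rewrite coefP sp ltnSn /= subnn expr0 mulr1.
  by have := monicP mp; rewrite /lead_coef sp /= => ->.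
- rewrite /root horner_poly.
  have -> : \sum_(i < size p) p`_i * c ^+ (k - i) * (c * x) ^+ i
           = c ^+ k * \sum_(i < size p) p`_i * x ^+ i.
    rewrite mulr_sumr; apply: eq_bigr => i _.
    have hi : (i <= k)%N by rewrite -ltnS -sp.
    rewrite exprMn -[in RHS](subnK hi) exprD.
    set u := c ^+ (k - i); set v := c ^+ i; set w := x ^+ i.
    ring.
  by rewrite -horner_coef (rootP rp) mulr0.
- apply/integral_poly => i; rewrite coefP.
  case: ifP => hi; last exact: integral0.
  have [lik | ] := ltnP i k.
    rewrite -(subnSK lik) exprS mulrA.
    by apply: Int_M; [exact: Ip | exact: Int_X].
  move=> kle; have ik : i = k by apply/eqP; rewrite eqn_leq kle andbT -ltnS -sp.
  rewrite ik subnn expr0 mulr1.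
  have := monicP mp; rewrite /lead_coef sp /= => ->; exact: Int_1.
Qed.


Lemma adjoin_affine (K0 : {subfield L}) (x a c : L) :
  a \in K0 -> c \in K0 -> c != 0 -> <<K0; a + c * x>>%VS = <<K0; x>>%VS.
Proof.
move=> aK cK nzc; apply/eqP; rewrite eqEsubv; apply/andP; split.
  apply/FadjoinP; split; first exact: subv_adjoin.
  have hx : x \in <<K0; x>>%AS by exact: memv_adjoin.
  have ha : a \in <<K0; x>>%AS by exact: (subvP (subv_adjoin K0 x)).
  have hc : c \in <<K0; x>>%AS by exact: (subvP (subv_adjoin K0 x)).
  by apply: memvD => //; apply: memvM.
apply/FadjoinP; split; first exact: subv_adjoin.
set y := a + c * x.
have hy : y \in <<K0; y>>%AS by exact: memv_adjoin.
have ha : a \in <<K0; y>>%AS by exact: (subvP (subv_adjoin K0 y)).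
have hc : c \in <<K0; y>>%AS by exact: (subvP (subv_adjoin K0 y)).
have -> : x = (y - a) / c.
  by rewrite /y addrC addKr mulrC mulKf.
apply: memvM; last by rewrite memvV.
by apply: memvB.
Qed.

Lemma exists_Int_multiple (x : L) : exists2 a : int, a != 0 & Int (a%:~R * x).
Proof.
have [p0 Dp] := polyOver1P (minPolyOver 1 x).
have [q [a nz_a Dq]] := rat_poly_scale p0.
exists a => //.
apply: (@Int_scale_root (minPoly 1 x)); [exact: monic_minPoly | exact: root_minPoly | exact: Int_int |].
move=> i _; rewrite Dp coef_map /= Dq coefZ coef_map /=. 
rewrite -(rmorph_int (in_alg L) a) -(rmorphM (in_alg L)) /= mulrC mulrA mulfV ?intr_eq0 // mul1r.
by rewrite scaler_int; exact: Int_int.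
Qed.

Lemma intrL_eq0 (a : int) : ((a%:~R : L) == 0) = (a == 0).
Proof. by rewrite -(rmorph_int (in_alg L)) fmorph_eq0 intr_eq0. Qed.

Lemma exists_Int_primitive (K0 K : {subfield L}) : galois K0 K ->
  exists th : L, [/\ th \in K, Int th, th != 0 & <<K0; th>>%VS = K].
Proof.
case/and3P => sK0K sepK _.
set t0 := separable_generator K0 K.
have DK := eq_adjoin_separable_generator sepK sK0K.
have t0K : t0 \in K by rewrite /t0 separable_generator_mem.
have [a nz_a It1] := exists_Int_multiple t0.
have aK0 : (a%:~R : L) \in K0 by rewrite rpred_int.
have t1K : a%:~R * t0 \in K by rewrite rpredM // rpred_int.
have E1 : <<K0; a%:~R * t0>>%VS = K.
  rewrite -[a%:~R * t0]add0r adjoin_affine ?rpred0 ?intr_eq0 //;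
  by rewrite intrL_eq0.
have [z1|nz1] := eqVneq (a%:~R * t0 : L) 0.
  exists 1; split; [exact: rpred1 | exact: Int_1 | exact: oner_neq0 |].
  by rewrite -E1 z1 (Fadjoin_idP (rpred0 _)) (Fadjoin_idP (rpred1 _)).
by exists (a%:~R * t0).
Qed.


Lemma natrL_inj : injective (fun n : nat => (n%:R : L)).
Proof.
move=> m n /= /eqP; rewrite -(rmorph_nat (in_alg L) m) -(rmorph_nat (in_alg L) n).
by rewrite (inj_eq (fmorph_inj (in_alg L))) eqr_nat => /eqP.
Qed.

Lemma exists_m (I : finType) (S : {set I}) (c : I -> L) :
  S != set0 -> (forall i, i \in S -> c i != 0) ->
  exists m : nat, (0 < m)%N /\ (\prod_(i in S) (c i * m%:R + 1)) ^+ 2 != 1.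
Proof.
move=> nzS nzc.
pose P := \prod_(i in S) ((c i)%:P * 'X + 1%:P).
have hP x : P.[x] = \prod_(i in S) (c i * x + 1).
  by rewrite horner_prod; apply: eq_bigr => i _; rewrite hornerE /= !hornerE.
have sF i : i \in S -> size ((c i)%:P * 'X + 1%:P) = 2%N.
  move=> iS; rewrite size_MXaddC polyC_eq0 (negbTE (nzc i iS)) /=.
  by rewrite size_polyC nzc.
have sP : size P = (#|S|).+1.
  rewrite /P size_prod; last first.
    by move=> i iS; rewrite -size_poly_eq0 sF.
  rewrite (eq_bigr (fun _ => 2%N)) => [|i iS]; last exact: sF.
  rewrite sum_nat_const; have -> : #|in_mem^~ (mem S)| = #|S| by []. lia.
have nzP : P != 0 by rewrite -size_poly_eq0 sP.
have cS : (0 < #|S|)%N by rewrite card_gt0.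
pose Q := P * P - 1.
have sQ : size Q = (#|S|.*2).+1.
  rewrite /Q size_addl size_mul // sP; first by rewrite addSn addnS -addnn.
  rewrite size_opp size_polyC oner_neq0 /=; lia.
have nzQ : Q != 0 by rewrite -size_poly_eq0 sQ.
pose rs := [seq (j.+1)%:R : L | j <- iota 0 (size Q)].
have urs : uniq rs.
  by rewrite map_inj_uniq ?iota_uniq // => i j /natrL_inj [].
have : ~~ all (root Q) rs.
  apply/negP => /(max_poly_roots nzQ) /(_ urs).
  by rewrite size_map size_iota ltnn.
case/allPn => x /mapP [j _ ->] nr.
exists j.+1; split => //.
rewrite -hP; apply: contra nr => /eqP e.
by rewrite /root /Q hornerD hornerN hornerM hornerC -expr2 e subrr.
Qed.


Notation N x := (galNorm 1%VS fullv x).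

Lemma galois1f : galois (1%AS : {subfield L}) fullv.
Proof.
apply/and3P; split; first exact: subvf.
  apply/separableP => y _; apply: pcharf0_separable.
  by move=> p; rewrite (pchar_lalg L) pchar_num.
exact: normalFieldf.
Qed.

Lemma norm_rat (x : L) : exists r : rat, N x = r%:A.
Proof.
have := mem_galNorm galois1f (memvf x).
by case/vlineP => r ->; exists r.
Qed.

Lemma Int_norm (x : L) : Int x -> Int (N x).
Proof. by move=> Ix; apply: Int_prod => s _; apply: Int_aend. Qed.

Lemma norm_div (x : L) :
  N x = x * \prod_(s in ('Gal(fullv / 1%VS))%g | s != 1%g) s x.
Proof.
by rewrite /galNorm (bigD1 1%g) ?group1 //= gal_id.
Qed.

End Helpers.

Lemma Int_nat (L : splittingFieldType rat) n : integralOver (intr : int -> L) (n%:R : L).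
Proof. exact: integral_nat. Qed.

Theorem lemma6p4 (L : splittingFieldType rat) (K0 K : {subfield L})
    (hK0K : (K0 <= K)%VS) (hgal : galois K0 K)
    (b : L) (hb : in_ring_of_integers K b) (hb0 : b != 0) :
  exists z : L,
    [/\ in_ring_of_integers K z,
        ~ (exists w : L, in_ring_of_integers K w /\ z * w = 1),
        <<K0; z>>%VS = K,
        (forall g h : gal_of K, g \in 'Gal(K / K0)%g -> h \in 'Gal(K / K0)%g ->
           g != h ->
           exists r s : L, [/\ in_ring_of_integers K r, in_ring_of_integers K s &
                               g z * r + h z * s = 1])
      & (forall g : gal_of K, g \in 'Gal(K / K0)%g ->
           exists r s : L, [/\ in_ring_of_integers K r, in_ring_of_integers K s &
                               g z * r + b * s = 1])].
Proof.
have [th [thK Ith nzth Eth]] := exists_Int_primitive K0 K hgal.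
case: hb => bK /IntE Ib.
set G := 'Gal(K / K0)%g.
have key : forall (V : {vspace L}), <<K0; th>>%VS = V ->
    forall g h : gal_of V, g \in 'Gal(V / K0)%g -> h \in 'Gal(V / K0)%g ->
    (g == h) = (g th == h th).
  by move=> V <-; exact: gal_adjoin_eq.
have neq : forall g h : gal_of K, g \in G -> h \in G -> g != h -> g th - h th != 0.
  by move=> g h gG hG; rewrite (key _ Eth) // subr_eq0.
pose D := b * \prod_(g in G) \prod_(h in G | h != g) (g th - h th).
have nzD : D != 0.
  rewrite mulf_neq0 //; apply/prodf_neq0 => g gG; apply/prodf_neq0 => h /andP[hG hg].
  by apply: neq; rewrite // eq_sym.
have ID : integralOver (intr : int -> L) D.
  apply: Int_M => //; apply: Int_prod => g _; apply: Int_prod => h _.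
  by apply: Int_B; apply: Int_aend.
pose R := \prod_(s in ('Gal(fullv / 1%VS))%g | s != 1%g) s D.
have IR : integralOver (intr : int -> L) R.
  by apply: Int_prod => s _; apply: Int_aend.
pose d := galNorm 1%VS fullv D.
have dDR : d = D * R by rewrite /d norm_div.
have nzd : d != 0 by rewrite /d galNorm_eq0.
have Id : integralOver (intr : int -> L) d by apply: Int_norm.
have [r Dr] := norm_rat D.
have divgh : forall g h, g \in G -> h \in G -> g != h ->
    exists2 f, integralOver (intr : int -> L) f & d = (g th - h th) * f.
  move=> g h gG hG ngh.
  pose Fg := \prod_(h' in G | h' != g) (g th - h' th).
  pose restg := \prod_(g' in G | g' != g) \prod_(h' in G | h' != g') (g' th - h' th).
  pose resth := \prod_(h' | (h' \in G) && (h' != g) && (h' != h)) (g th - h' th).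
  have E1 : \prod_(g' in G) \prod_(h' in G | h' != g') (g' th - h' th) = Fg * restg.
    by rewrite (bigD1 g).
  have E2 : Fg = (g th - h th) * resth.
    rewrite /Fg (bigD1 h) /=; [reflexivity | by rewrite hG eq_sym].
  exists (b * resth * restg * R).
    apply: Int_M => //; apply: Int_M; [apply: Int_M => //|].
      by apply: Int_prod => h' _; apply: Int_B; apply: Int_aend.
    by apply: Int_prod => g' _; apply: Int_prod => h' _; apply: Int_B; apply: Int_aend.
  by rewrite dDR /D E1 E2; ring.
have divb : exists2 f, integralOver (intr : int -> L) f & d = b * f.
  by exists ((\prod_(g in G) \prod_(h in G | h != g) (g th - h th)) * R);
    [apply: Int_M => //; apply: Int_prod => g _; apply: Int_prod => h _; apply: Int_B; apply: Int_aend
    | rewrite dDR /D mulrA].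
pose S := ('Gal(fullv / 1%VS) : {set gal_of (fullv : {vspace L})})%g.
have nzS : S != set0 by apply/set0Pn; exists 1%g; exact: group1.
have nzc : forall s, s \in S -> (fun s : gal_of fullv => r%:A * s th) s != 0.
  by move=> s _ /=; rewrite mulf_neq0 // ?fmorph_eq0 // -Dr.
have [m [m0 hm]] := exists_m _ S _ nzS nzc.
pose dd := m%:R * d.
have nzm : (m%:R : L) != 0.
  by apply/eqP => e; have := @natrL_inj L m 0%N e => /= e0; rewrite e0 in m0.
have nzdd : dd != 0 by rewrite mulf_neq0.
have Idd : integralOver (intr : int -> L) dd by apply: Int_M => //; exact: Int_nat.
have ddK0 : dd \in K0 by rewrite /dd /d Dr rpredM ?rpred_nat // rpredZ // rpred1.
have ddK : dd \in K by exact: (subvP hK0K).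
have fixdd : forall f : 'AEnd(L), f dd = dd.
  by move=> f; rewrite /dd /d Dr rmorphM rmorph_nat; congr (_ * _); exact: rmorph_alg.
pose z := 1 + dd * th.
have gz : forall f : 'AEnd(L), f z = 1 + dd * f th.
  by move=> f; rewrite /z rmorphD rmorph1 rmorphM; congr (_ + _ * _); apply: fixdd.
have zK : z \in K by rewrite /z rpredD ?rpred1 // rpredM.
have Iz : integralOver (intr : int -> L) z by apply: Int_D; [exact: Int_1 | exact: Int_M].
exists z; split.
- by split => //; apply/IntE.
- case=> w [[wK /IntE Iw] zw].
  have Nzw : galNorm 1%VS fullv z * galNorm 1%VS fullv w = 1.
    by rewrite -galNormM zw galNorm1.
  have [r1 Dr1] := norm_rat z.
  have [r2 Dr2] := norm_rat w.
  have /Int_rat /intrP [a1 Da1] : integralOver (intr : int -> L) (r1%:A).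
    by rewrite -Dr1; apply: Int_norm.
  have /Int_rat /intrP [a2 Da2] : integralOver (intr : int -> L) (r2%:A).
    by rewrite -Dr2; apply: Int_norm.
  have r12 : r1 * r2 = 1.
    apply: (fmorph_inj (in_alg L)).
    by rewrite rmorphM rmorph1 /= -Dr1 -Dr2.
  have a12 : a1 * a2 = 1.
    apply: (@intr_inj rat); rewrite rmorphM /= -Da1 -Da2 r12 //.
  have a11 : a1 * a1 = 1.
    have : a1 \is a intUnitRing.unitz by apply: (@intUnitRing.unitzPl a1 a2); rewrite mulrC.
    by rewrite qualifE => /orP [] /eqP ->.
  have Nz2 : galNorm 1%VS fullv z ^+ 2 = 1.
    rewrite Dr1 -(rmorphXn (in_alg L)) /= Da1 -rmorphXn /= expr2 a11.
    by rewrite rmorph1 /= scale1r.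
  have eqN : galNorm 1%VS fullv z = \prod_(i in S) (r%:A * i th * m%:R + 1).
    by rewrite /galNorm; apply: eq_bigr => s _; rewrite gz /dd /d Dr; ring.
  by move: hm; rewrite -eqN Nz2 eqxx.
- by rewrite /z adjoin_affine ?rpred1.
- move=> g h gG hG ngh.
  have [f If Df] := divgh g h gG hG ngh.
  have ne := neq g h gG hG ngh.
  have aK : g th \in K by exact: memv_gal.
  have cK : h th \in K by exact: memv_gal.
  have gzK : g z \in K by exact: memv_gal.
  have Ia : integralOver (intr : int -> L) (g th) by exact: Int_aend.
  pose f' := m%:R * f.
  have ddE : dd = (g th - h th) * f' by rewrite /dd Df /f'; ring.
  have f'K : f' \in K.
    have -> : f' = dd / (g th - h th) by rewrite ddE mulrC mulKf.
    by rewrite rpredM // rpredV rpredB.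
  have If' : integralOver (intr : int -> L) f' by apply: Int_M => //; exact: Int_nat.
  exists (g z - 2%:R * dd * g th + f' * g th ^+ 2), (- (f' * g th ^+ 2)); split.
  clearbody f' dd.
  + split; first by rewrite rpredD ?rpredB ?rpredM ?rpredX ?rpred_nat //.
    apply/IntE; apply: Int_D; last by apply: Int_M => //; exact: Int_X.
    apply: Int_B; first by apply: Int_aend.
    by apply: Int_M => //; apply: Int_M => //; exact: Int_nat.
  + split; first by rewrite rpredN rpredM ?rpredX.
    by apply/IntE; apply: Int_N; apply: Int_M => //; exact: Int_X.
  + rewrite !gz ddE; ring.
- move=> g gG.
  have [fb Ifb Dfb] := divb.
  have aK : g th \in K by exact: memv_gal.
  have Ia : integralOver (intr : int -> L) (g th) by exact: Int_aend.
  pose f' := m%:R * fb.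
  have ddE : dd = b * f' by rewrite /dd Dfb /f'; ring.
  have f'K : f' \in K.
    have -> : f' = dd / b by rewrite ddE mulrC mulKf.
    by rewrite rpredM // rpredV.
  have If' : integralOver (intr : int -> L) f' by apply: Int_M => //; exact: Int_nat.
  clearbody f' dd.
  exists 1, (- (f' * g th)); split.
  + by split; [exact: rpred1 | apply/IntE; exact: Int_1].
  + split; first by rewrite rpredN rpredM.
    by apply/IntE; apply: Int_N; apply: Int_M.
  + rewrite gz ddE; ring.
Qed.
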